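(* Let $X$ be a real Hilbert space, $I$ a finite index set, and $(T_i)_{i\in I}$ averaged nonexpansive, boundedly linearly regular operators $X\to X$ with $Z_i=\operatorname{Fix}T_i$, $Z=\bigcap_iZ_i\ne\varnothing$, and $(Z_i)_{i\in I}$ boundedly linearly regular. Let $(\pi_i)_{i\in I}$ be probabilities with $\pi_i>0$ and $\sum_i\pi_i=1$. Let $x_0\in X$ and generate $x_{n+1}=T_{i_n}x_n$ where the indices $i_n$ are chosen independently with $\mathbb P(i_n=i)=\pi_i$. Then there is a constant $\theta<1$, depending only on $x_0$ (and the data $(T_i),(\pi_i)$), such that for every $n\in\mathbb N$, $\mathbf E\big[d_Z^2(x_{n+1})\mid x_n\big]\le\theta\,d_Z^2(x_n)$.
   Context: $T$ is averaged nonexpansive if $T=(1-\lambda)\mathrm{Id}+\lambda N$ with $\lambda\in[0,1[$ and $N$ nonexpansive; boundedly linearly regular (operator) if for each $\rho>0$ there is $\kappa\ge0$ with $d_{\operatorname{Fix}T}(x)\le\kappa\|x-Tx\|$ for all $\|x\|\le\rho$. A finite family $(C_i)$ of closed convex sets with $C=\bigcap_iC_i\ne\varnothing$ is boundedly linearly regular if for every $\rho>0$ there is $\mu>0$ with $d_C(x)\le\mu\max_id_{C_i}(x)$ for all $\|x\|\le\rho$. *)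

(* Defs.v *)
From Stdlib Require Import Reals Lra List ClassicalEpsilon.
Open Scope R_scope.

Record HilbertSpace := mkHilbert {
  hcar :> Type;
  hzero : hcar;
  hadd : hcar -> hcar -> hcar;
  hopp : hcar -> hcar;
  hscal : R -> hcar -> hcar;
  hinner : hcar -> hcar -> R;
  hadd_assoc : forall x y z, hadd x (hadd y z) = hadd (hadd x y) z;
  hadd_comm : forall x y, hadd x y = hadd y x;
  hadd_zero : forall x, hadd x hzero = x;
  hadd_opp : forall x, hadd x (hopp x) = hzero;
  hscal_one : forall x, hscal 1 x = x;
  hscal_assoc : forall a b x, hscal a (hscal b x) = hscal (a * b) x;
  hscal_distr_l : forall a x y, hscal a (hadd x y) = hadd (hscal a x) (hscal a y);
  hscal_distr_r : forall a b x, hscal (a + b) x = hadd (hscal a x) (hscal b x);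
  hinner_sym : forall x y, hinner x y = hinner y x;
  hinner_add_l : forall x y z, hinner (hadd x y) z = hinner x z + hinner y z;
  hinner_scal_l : forall a x y, hinner (hscal a x) y = a * hinner x y;
  hinner_pos : forall x, 0 <= hinner x x;
  hinner_def : forall x, hinner x x = 0 -> x = hzero;
  hcomplete : forall u : nat -> hcar,
    (forall eps, 0 < eps -> exists N, forall p q, (N <= p)%nat -> (N <= q)%nat ->
       sqrt (hinner (hadd (u p) (hopp (u q))) (hadd (u p) (hopp (u q)))) < eps) ->
    exists l, forall eps, 0 < eps -> exists N, forall n, (N <= n)%nat ->
       sqrt (hinner (hadd (u n) (hopp l)) (hadd (u n) (hopp l))) < eps
}.

Arguments hzero {h}. Arguments hadd {h}. Arguments hopp {h}.
Arguments hscal {h}. Arguments hinner {h}.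

Section Defs.
Context {X : HilbertSpace}.

Definition hsub (x y : X) : X := hadd x (hopp y).
Definition hnorm (x : X) : R := sqrt (hinner x x).

Definition is_glb (S : R -> Prop) (d : R) : Prop :=
  (forall r, S r -> d <= r) /\ (forall b, (forall r, S r -> b <= r) -> b <= d).

(** Distance to a set: d_C(x) = inf { ||x - c|| : c in C }
    (well defined whenever C is nonempty). *)
Definition dist_set (C : X -> Prop) (x : X) : R :=
  epsilon (inhabits 0)
    (fun d => is_glb (fun r => exists c, C c /\ r = hnorm (hsub x c)) d).

Definition nonexpansive (N : X -> X) : Prop :=
  forall x y, hnorm (hsub (N x) (N y)) <= hnorm (hsub x y).

Definition averaged_nonexpansive (T : X -> X) : Prop :=
  exists (lam : R) (N : X -> X), 0 <= lam < 1 /\ nonexpansive N /\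
    forall x, T x = hadd (hscal (1 - lam) x) (hscal lam (N x)).

Definition Fix (T : X -> X) : X -> Prop := fun x => T x = x.

Definition bdd_lin_regular_op (T : X -> X) : Prop :=
  forall rho, 0 < rho -> exists kappa, 0 <= kappa /\
    forall x, hnorm x <= rho -> dist_set (Fix T) x <= kappa * hnorm (hsub x (T x)).

Definition inter_family (m : nat) (C : nat -> X -> Prop) : X -> Prop :=
  fun x => forall i, (i < m)%nat -> C i x.

Definition max_family (m : nat) (f : nat -> R) : R :=
  fold_right Rmax 0 (map f (seq 0 m)).

Definition sum_family (m : nat) (f : nat -> R) : R :=
  fold_right Rplus 0 (map f (seq 0 m)).

Definition bdd_lin_regular_family (m : nat) (C : nat -> X -> Prop) : Prop :=
  forall rho, 0 < rho -> exists mu, 0 < mu /\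
    forall x, hnorm x <= rho ->
      dist_set (inter_family m C) x <= mu * max_family m (fun i => dist_set (C i) x).

(** Iterates along a sample path of indices: x_{n+1} = T_{idx n} x_n. *)
Fixpoint iterates (T : nat -> X -> X) (idx : nat -> nat) (x0 : X) (n : nat) : X :=
  match n with
  | O => x0
  | S k => T (idx k) (iterates T idx x0 k)
  end.

End Defs.

(* Main.v *)
Require Import Defs.
From Stdlib Require Import Reals List Lra Psatz ClassicalEpsilon Classical Lia.
Open Scope R_scope.

Section H.
Context {X : HilbertSpace}.

Definition n2 (v : X) := hinner v v.

Lemma inner_zero_l (y : X) : hinner hzero y = 0.
Proof.
  assert (E: hinner (hadd (@hzero X) hzero) y = hinner hzero y + hinner hzero y)
    by apply hinner_add_l.
  rewrite hadd_zero in E. lra.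
Qed.

Lemma inner_opp_l (x y : X) : hinner (hopp x) y = - hinner x y.
Proof.
  assert (E := hinner_add_l _ x (hopp x) y). rewrite hadd_opp, inner_zero_l in E. lra.
Qed.

Lemma inner_add_r (x y z : X) : hinner x (hadd y z) = hinner x y + hinner x z.
Proof. rewrite !(hinner_sym _ x). apply hinner_add_l. Qed.
Lemma inner_opp_r (x y : X) : hinner x (hopp y) = - hinner x y.
Proof. rewrite !(hinner_sym _ x). apply inner_opp_l. Qed.
Lemma inner_scal_r a (x y : X) : hinner x (hscal a y) = a * hinner x y.
Proof. rewrite !(hinner_sym _ x). apply hinner_scal_l. Qed.

Ltac expand := unfold n2, hsub in *;
  repeat rewrite ?hinner_add_l, ?inner_add_r, ?inner_opp_l, ?inner_opp_r,
    ?hinner_scal_l, ?inner_scal_r in *.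

Lemma n2_pos (v : X) : 0 <= n2 v.
Proof. apply hinner_pos. Qed.

Lemma hnorm_sq (v : X) : hnorm v ^ 2 = n2 v.
Proof. unfold hnorm. apply pow2_sqrt, hinner_pos. Qed.

Lemma hnorm_pos (v : X) : 0 <= hnorm v.
Proof. apply sqrt_pos. Qed.

Lemma avg_key (T N : X -> X) lam :
  0 <= lam < 1 -> nonexpansive N ->
  (forall x, T x = hadd (hscal (1 - lam) x) (hscal lam (N x))) ->
  forall x y, n2 (hsub (T x) (T y)) + (1 - lam) * n2 (hsub (hsub x (T x)) (hsub y (T y)))
     <= n2 (hsub x y).
Proof.
  intros Hl HN HT x y.
  assert (HB : n2 (hsub (N x) (N y)) <= n2 (hsub x y)).
  { apply sqrt_le_0; try apply n2_pos. apply HN. }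
  assert (HW := n2_pos (hsub (hsub x y) (hsub (N x) (N y)))).
  assert (H1 : 0 <= lam * (n2 (hsub x y) - n2 (hsub (N x) (N y)))) by (apply Rmult_le_pos; lra).
  assert (H2 : 0 <= lam * ((1 - lam) * (1 - lam)) * n2 (hsub (hsub x y) (hsub (N x) (N y)))).
  { apply Rmult_le_pos; [apply Rmult_le_pos; [lra|nra]|exact HW]. }
  clear HB HW.
  rewrite !HT.
  expand.
  rewrite ?(hinner_sym y x), ?(hinner_sym (N x) x), ?(hinner_sym (N y) x),
    ?(hinner_sym (N x) y), ?(hinner_sym (N y) y), ?(hinner_sym (N y) (N x)) in *.
  lra.
Qed.


Definition Sd (C : X -> Prop) (x : X) := fun r => exists c, C c /\ r = hnorm (hsub x c).

Lemma dist_glb (C : X -> Prop) x : (exists c, C c) -> is_glb (Sd C x) (dist_set C x).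
Proof.
  intros [c0 Hc0]. unfold dist_set. apply epsilon_spec.
  destruct (completeness (fun r => Sd C x (- r))) as [m [Hm1 Hm2]].
  - exists 0. intros r [c [_ Hr]]. assert (0 <= hnorm (hsub x c)) by apply hnorm_pos. lra.
  - exists (- hnorm (hsub x c0)). exists c0. split; auto. lra.
  - exists (- m). split.
    + intros r Hr. assert (- r <= m). { apply Hm1. now rewrite Ropp_involutive. } lra.
    + intros b Hb. assert (m <= - b). { apply Hm2. intros r Hr. specialize (Hb _ Hr). lra. } lra.
Qed.

Lemma dist_nonneg (C : X -> Prop) x : (exists c, C c) -> 0 <= dist_set C x.
Proof.
  intros H. destruct (dist_glb C x H) as [_ H2]. apply H2.
  intros r [c [_ ->]]. apply hnorm_pos.
Qed.

Lemma dist_le (C : X -> Prop) x c : C c -> dist_set C x <= hnorm (hsub x c).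
Proof.
  intros H. destruct (dist_glb C x (ex_intro _ c H)) as [H1 _]. apply H1. exists c; auto.
Qed.

Lemma dist_approx (C : X -> Prop) x eps : (exists c, C c) -> 0 < eps ->
  exists c, C c /\ hnorm (hsub x c) < dist_set C x + eps.
Proof.
  intros H Heps. apply NNPP. intros Hn.
  destruct (dist_glb C x H) as [_ H2].
  assert (dist_set C x + eps <= dist_set C x); [|lra].
  apply H2. intros r [c [Hc ->]].
  apply Rnot_lt_le. intros Hlt. apply Hn. exists c; auto.
Qed.

Lemma dist_step (C : X -> Prop) x y a : (exists c, C c) ->
  (forall c, C c -> n2 (hsub y c) <= n2 (hsub x c) - a) ->
  dist_set C y ^ 2 <= dist_set C x ^ 2 - a.
Proof.
  intros Hne H.
  set (d := dist_set C x). set (dy := dist_set C y).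
  assert (Hd : 0 <= d) by apply dist_nonneg, Hne.
  assert (Hdy : 0 <= dy) by apply dist_nonneg, Hne.
  assert (Hall : forall eps, 0 < eps -> dy ^ 2 <= (d + eps) ^ 2 - a).
  { intros eps He. destruct (dist_approx C x eps Hne He) as [c [Hc Hlt]]. fold d in Hlt.
    assert (E1 : dy <= hnorm (hsub y c)) by (apply dist_le; auto).
    assert (E2 := H c Hc). rewrite <- !hnorm_sq in E2.
    assert (0 <= hnorm (hsub x c)) by apply hnorm_pos.
    assert (dy ^ 2 <= hnorm (hsub y c) ^ 2) by (apply pow_incr; auto).
    assert (hnorm (hsub x c) ^ 2 <= (d + eps) ^ 2) by (apply pow_incr; lra).
    lra. }
  apply Rnot_lt_le. intros Hlt.
  set (del := dy ^ 2 - (d ^ 2 - a)).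
  assert (Hdel : 0 < del) by (unfold del; lra).
  set (eps := Rmin 1 (del / (2 * (2 * d + 1)))).
  assert (He1 : eps <= 1) by apply Rmin_l.
  assert (He2 : eps <= del / (2 * (2 * d + 1))) by apply Rmin_r.
  assert (He0 : 0 < eps).
  { unfold eps. apply Rmin_case; [lra|]. apply Rdiv_lt_0_compat; lra. }
  specialize (Hall eps He0).
  assert (eps * (2 * (2 * d + 1)) <= del).
  { apply (Rmult_le_compat_r (2 * (2 * d + 1))) in He2; [|lra].
    unfold Rdiv in He2. rewrite Rmult_assoc, Rinv_l in He2; lra. }
  assert (eps * eps <= eps) by nra. unfold del in *. lra.
Qed.

End H.

Definition sumL (f : nat -> R) (l : list nat) := fold_right Rplus 0 (map f l).

Lemma sumL_le f g l : (forall i, In i l -> f i <= g i) -> sumL f l <= sumL g l.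
Proof.
  induction l as [|a l IH]; simpl; intros H; unfold sumL in *; simpl; [lra|].
  apply Rplus_le_compat; [apply H; auto|apply IH; intros; apply H; auto].
Qed.

Lemma sumL_scal c f l : sumL (fun i => c * f i) l = c * sumL f l.
Proof. induction l; unfold sumL in *; simpl; [ring|rewrite IHl; ring]. Qed.

Lemma sumL_minus f g l : sumL (fun i => f i - g i) l = sumL f l - sumL g l.
Proof. induction l; unfold sumL in *; simpl; [ring|rewrite IHl; ring]. Qed.

Lemma sumL_zero l : sumL (fun _ => 0) l = 0.
Proof. induction l; unfold sumL in *; simpl; [auto|rewrite IHl; ring]. Qed.

Lemma sumL_nonneg f l : (forall i, In i l -> 0 <= f i) -> 0 <= sumL f l.
Proof.
  intros H. assert (E := sumL_le (fun _ => 0) f l H). rewrite sumL_zero in E. exact E.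
Qed.

Lemma max_sq f l : (forall i, In i l -> 0 <= f i) ->
  (fold_right Rmax 0 (map f l)) ^ 2 <= sumL (fun i => f i ^ 2) l.
Proof.
  induction l as [|a l IH]; intros H; unfold sumL in *; cbn [map fold_right]; [lra|].
  assert (Ha : 0 <= f a) by (apply H; left; reflexivity).
  assert (IH' := IH (fun i Hi => H i (or_intror Hi))).
  assert (H0 : 0 <= fold_right Rmax 0 (map f l)).
  { clear IH IH'. induction l; simpl; [lra|]. eapply Rle_trans; [|apply Rmax_r].
    apply IHl. intros; apply H; simpl in *; tauto. }
  assert (0 <= f a ^ 2) by nra. assert (0 <= fold_right Rmax 0 (map f l) ^ 2) by nra. apply Rmax_case; lra.
Qed.

Lemma unif_min m (P : nat -> R -> Prop) :
  (forall i a b, P i a -> 0 < b <= a -> P i b) ->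
  (forall i, (i < m)%nat -> exists a, 0 < a /\ P i a) ->
  exists a, 0 < a /\ forall i, (i < m)%nat -> P i a.
Proof.
  intros Hm. induction m as [|m IH]; intros H.
  - exists 1. split; [lra|]. intros; lia.
  - destruct IH as [a [Ha HP]]. { intros; apply H; lia. }
    destruct (H m (Nat.lt_succ_diag_r m)) as [b [Hb HPb]].
    exists (Rmin a b). split. { apply Rmin_case; lra. }
    intros i Hi. destruct (Nat.eq_dec i m) as [->|Hne].
    + apply (Hm _ b); auto. split; [apply Rmin_case; lra|apply Rmin_r].
    + apply (Hm _ a); [apply HP; lia|]. split; [apply Rmin_case; lra|apply Rmin_l].
Qed.

Lemma unif_max m (P : nat -> R -> Prop) :
  (forall i a b, P i a -> a <= b -> P i b) ->
  (forall i, (i < m)%nat -> exists a, 0 <= a /\ P i a) ->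
  exists a, 0 <= a /\ forall i, (i < m)%nat -> P i a.
Proof.
  intros Hm. induction m as [|m IH]; intros H.
  - exists 0. split; [lra|]. intros; lia.
  - destruct IH as [a [Ha HP]]. { intros; apply H; lia. }
    destruct (H m (Nat.lt_succ_diag_r m)) as [b [Hb HPb]].
    exists (Rmax a b). split. { apply Rmax_case; lra. }
    intros i Hi. destruct (Nat.eq_dec i m) as [->|Hne].
    + apply (Hm _ b); auto. apply Rmax_r.
    + apply (Hm _ a); [apply HP; lia|]. apply Rmax_l.
Qed.

Lemma hopp_zero (X : HilbertSpace) : hopp (@hzero X) = hzero.
Proof.
  assert (E := hadd_opp _ (@hzero X)). rewrite hadd_comm, hadd_zero in E. exact E.
Qed.

Lemma hsub_self_zero (X : HilbertSpace) (v c : X) : hsub v (hsub c c) = v.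
Proof. unfold hsub at 2. rewrite hadd_opp. unfold hsub. rewrite hopp_zero, hadd_zero. reflexivity. Qed.

Lemma norm_bound (X : HilbertSpace) (x z : X) : n2 x <= 2 * n2 (hsub x z) + 2 * n2 z.
Proof.
  assert (H := n2_pos (hsub (hsub x z) z)).
  unfold n2, hsub in *.
  repeat rewrite ?hinner_add_l, ?inner_add_r, ?inner_opp_l, ?inner_opp_r in *.
  rewrite ?(hinner_sym z x) in *. lra.
Qed.

Lemma sf_in m i : In i (seq 0 m) -> (i < m)%nat.
Proof. rewrite in_seq. lia. Qed.

Theorem corollary6p4 (X : HilbertSpace) (m : nat) (T : nat -> X -> X)
  (pi : nat -> R) (x0 : X) :
  (forall i, (i < m)%nat -> averaged_nonexpansive (T i)) ->
  (forall i, (i < m)%nat -> bdd_lin_regular_op (T i)) ->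
  (exists z, inter_family m (fun i => Fix (T i)) z) ->
  bdd_lin_regular_family m (fun i => Fix (T i)) ->
  (forall i, (i < m)%nat -> 0 < pi i) ->
  sum_family m pi = 1 ->
  exists theta : R, theta < 1 /\
    forall idx : nat -> nat, (forall n, (idx n < m)%nat) ->
      forall n : nat,
        sum_family m (fun i => pi i *
           (dist_set (inter_family m (fun j => Fix (T j)))
                 (T i (iterates T idx x0 n))) ^ 2)
        <= theta * (dist_set (inter_family m (fun j => Fix (T j)))
                         (iterates T idx x0 n)) ^ 2.
Proof.
  intros HA HR [z Hz] HF Hpi Hsum.
  set (Z := inter_family m (fun i => Fix (T i))).
  assert (Hne : exists c, Z c) by (exists z; exact Hz).
  destruct (unif_min m (fun i a => forall x c, Fix (T i) c ->
      n2 (hsub (T i x) c) <= n2 (hsub x c) - a * n2 (hsub x (T i x)))) as [al [Hal HAL]].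
  { intros i a b H [Hb Hba] x c Hc. specialize (H x c Hc).
    assert (0 <= n2 (hsub x (T i x))) by apply n2_pos. nra. }
  { intros i Hi. destruct (HA i Hi) as [lam [N [Hl [HN HT]]]].
    exists (1 - lam). split; [lra|]. intros x c Hc.
    assert (K := avg_key (T i) N lam Hl HN HT x c).
    unfold Fix in Hc. rewrite Hc, hsub_self_zero in K. lra. }
  destruct (unif_min m (fun i a => a <= pi i)) as [p [Hp HP]].
  { intros; lra. }
  { intros i Hi. exists (pi i). split; [apply Hpi; auto | lra]. }
  set (rho := sqrt (2 * n2 (hsub x0 z) + 2 * n2 z) + 1).
  assert (Hrho : 0 < rho).
  { unfold rho. assert (0 <= sqrt (2 * n2 (hsub x0 z) + 2 * n2 z)) by apply sqrt_pos. lra. }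
  destruct (HF rho Hrho) as [mu [Hmu HMU]].
  destruct (unif_max m (fun i k => forall x, hnorm x <= rho ->
        dist_set (Fix (T i)) x <= k * hnorm (hsub x (T i x)))) as [ka [Hka HKA]].
  { intros i a b H Hab x Hx. specialize (H x Hx).
    assert (0 <= hnorm (hsub x (T i x))) by apply hnorm_pos. nra. }
  { intros i Hi. destruct (HR i Hi rho Hrho) as [k [Hk HK]]. exists k; auto. }
  set (K := mu ^ 2 * ka ^ 2 + 1).
  assert (HK0 : 0 < K) by (unfold K; nra).
  exists (1 - al * p / K). split.
  { assert (0 < al * p / K) by (apply Rdiv_lt_0_compat; nra). lra. }
  intros idx Hidx n.
  assert (Hb : forall k, n2 (hsub (iterates T idx x0 k) z) <= n2 (hsub x0 z)).
  { induction k; simpl; [lra|].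
    assert (E := HAL (idx k) (Hidx k) (iterates T idx x0 k) z (Hz _ (Hidx k))).
    assert (0 <= n2 (hsub (iterates T idx x0 k) (T (idx k) (iterates T idx x0 k)))) by apply n2_pos.
    nra. }
  fold Z.
  set (x := iterates T idx x0 n).
  assert (Hx : hnorm x <= rho).
  { unfold rho, hnorm. assert (E1 := norm_bound X x z). assert (E2 := Hb n). fold x in E2.
    assert (sqrt (hinner x x) <= sqrt (2 * n2 (hsub x0 z) + 2 * n2 z)); [|lra].
    apply sqrt_le_1_alt. unfold n2 in *. lra. }
  set (D := dist_set Z x).
  set (e := fun i => n2 (hsub x (T i x))).
  assert (HD0 : 0 <= D) by apply dist_nonneg, Hne.
  assert (S1 : forall i, (i < m)%nat -> dist_set Z (T i x) ^ 2 <= D ^ 2 - al * e i).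
  { intros i Hi. apply dist_step; [exact Hne|]. intros c Hc. apply HAL; auto. }
  set (S := sumL (fun i => pi i * e i) (seq 0 m)).
  assert (HS0 : 0 <= S).
  { apply sumL_nonneg. intros i Hi. apply sf_in in Hi.
    assert (0 < pi i) by auto. assert (0 <= e i) by apply n2_pos. nra. }
  assert (S1' : sum_family m (fun i => pi i * dist_set Z (T i x) ^ 2) <= D ^ 2 - al * S).
  { unfold sum_family. fold (sumL (fun i => pi i * dist_set Z (T i x) ^ 2) (seq 0 m)).
    eapply Rle_trans. apply (sumL_le _ (fun i => D ^ 2 * pi i - al * (pi i * e i))).
    { intros i Hi. apply sf_in in Hi. specialize (S1 i Hi). assert (0 < pi i) by auto. nra. }
    rewrite sumL_minus, !sumL_scal. unfold sum_family, S, sumL in *. rewrite Hsum. lra. }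
  assert (Hd : forall i, (i<m)%nat -> 0 <= dist_set (Fix (T i)) x).
  { intros i Hi. apply dist_nonneg. exists z. apply Hz, Hi. }
  assert (S2 : D <= mu * max_family m (fun i => dist_set (Fix (T i)) x)) by (apply HMU; auto).
  set (M := max_family m (fun i => dist_set (Fix (T i)) x)) in *.
  assert (HM0 : 0 <= M).
  { destruct (Rle_or_lt 0 M); auto. nra. }
  assert (S3 : D ^ 2 <= mu ^ 2 * M ^ 2).
  { rewrite <- Rpow_mult_distr. apply pow_incr; lra. }
  assert (S4 : M ^ 2 <= sumL (fun i => dist_set (Fix (T i)) x ^ 2) (seq 0 m)).
  { apply max_sq. intros i Hi. apply Hd, sf_in, Hi. }
  assert (S5 : sumL (fun i => dist_set (Fix (T i)) x ^ 2) (seq 0 m) <= ka ^ 2 * sumL e (seq 0 m)).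
  { rewrite <- sumL_scal. apply sumL_le. intros i Hi. apply sf_in in Hi.
    unfold e. rewrite <- hnorm_sq, <- Rpow_mult_distr. apply pow_incr. split; [auto|apply HKA; auto]. }
  assert (S6 : p * sumL e (seq 0 m) <= S).
  { rewrite <- sumL_scal. apply sumL_le. intros i Hi. apply sf_in in Hi.
    assert (0 <= e i) by apply n2_pos. assert (p <= pi i) by auto. nra. }
  assert (S7 : p * D ^ 2 <= K * S).
  { assert (0 <= sumL e (seq 0 m)) by (apply sumL_nonneg; intros; apply n2_pos).
    assert (0 <= mu ^ 2) by nra. assert (0 <= ka ^ 2) by nra.
    assert (D ^ 2 <= mu ^ 2 * (ka ^ 2 * sumL e (seq 0 m))).
    { eapply Rle_trans; [apply S3|]. apply Rmult_le_compat_l; auto. lra. }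
    assert (0 <= mu ^ 2 * ka ^ 2) by nra.
    assert (p * D ^ 2 <= p * (mu ^ 2 * (ka ^ 2 * sumL e (seq 0 m)))) by (apply Rmult_le_compat_l; lra).
    assert (mu ^ 2 * ka ^ 2 * (p * sumL e (seq 0 m)) <= mu ^ 2 * ka ^ 2 * S) by (apply Rmult_le_compat_l; lra).
    unfold K. nra. }
  assert (S8 : al * p / K * D ^ 2 <= al * S).
  { unfold Rdiv. apply (Rmult_le_reg_l K); auto.
    replace (K * (al * p * / K * D ^ 2)) with (al * (p * D ^ 2)) by (field; lra).
    nra. }
  lra.
Qed.
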